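(* In the setting below, the cokernel of $\bar\rho_{\mathfrak{ab}}\colon\bar G_{\mathfrak{ab}}\to\bar A_{\mathfrak{ab}}$ is free abelian.
   Context: Let $G$ be a group generated by $a_1,\dots,a_n$ with $z=a_1\cdots a_n$ central. Let $S_1,\dots,S_m\subseteq\{1,\dots,n\}$ with $|S_i\cap S_r|\le1$ for $i\neq r$. For $S\subseteq\{1,\dots,n\}$ let $G_S$ be the quotient of $G$ by the normal closure of $\{a_j:j\notin S\}$; let $a_{ij}$ be the image of $a_j$ in $G_{S_i}$ and $z_i=a_{i1}\cdots a_{in}$ (central in $G_{S_i}$). Let $\bar G=G/\langle z\rangle$, $\bar G_{S_i}=G_{S_i}/\langle z_i\rangle$, and assume each $\bar G_{S_i}$ is free of rank $|S_i|-1$, the images of any $|S_i|-1$ of the $a_{ij}$, $j\in S_i$, forming a free basis. Let $A=\prod_iG_{S_i}$, $\bar A=\prod_i\bar G_{S_i}$, $\rho\colon G\to A$ the product of projections and $\bar\rho\colon\bar G\to\bar A$ the induced map. Assume the abelianizations $G_{\mathfrak{ab}}$ and $A_{\mathfrak{ab}}$ are free abelian with bases the images of $a_1,\dots,a_n$ and of $a_{ij}$ ($1\le i\le m$, $j\in S_i$) respectively. The subscript $\mathfrak{ab}$ denotes abelianization of groups and homomorphisms. *)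

(* Defs.v *)
(* Possibly infinite groups are MathComp's [groupType]
   (boot/monoid.v); abelian groups are MathComp's [zmodType]. *)
From HB Require Import structures.
From mathcomp Require Import all_boot.
From Stdlib Require Import FunctionalExtensionality.

Set Implicit Arguments.
Unset Strict Implicit.
Unset Printing Implicit Defensive.

Local Open Scope group_scope.

Section GroupNotions.
Variable G : groupType.

Definition is_subgroup (N : G -> Prop) : Prop :=
  N 1 /\ (forall x y, N x -> N y -> N (x * y^-1)).

Definition is_normal_subgroup (N : G -> Prop) : Prop :=
  is_subgroup N /\ (forall x g, N x -> N (x ^ g)).

Definition subgroup_gen (X : G -> Prop) : G -> Prop :=
  fun x => forall N, is_subgroup N -> (forall y, X y -> N y) -> N x.

Definition normal_closure (X : G -> Prop) : G -> Prop :=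
  fun x => forall N, is_normal_subgroup N -> (forall y, X y -> N y) -> N x.

Definition commutator_subgroup : G -> Prop :=
  subgroup_gen (fun x => exists y z, x = [~ y, z]).

End GroupNotions.

Definition group_hom (G H : groupType) (f : G -> H) : Prop :=
  forall x y, f (x * y) = f x * f y.

(* [f : G -> H] is a quotient map of G by the normal subgroup N,
   i.e. H together with f is (a copy of) G/N with its projection. *)
Definition is_quotient_map (G H : groupType) (N : G -> Prop) (f : G -> H) : Prop :=
  [/\ group_hom f, (forall y, exists x, f x = y) & (forall x, f x = 1 <-> N x)].

Definition free_group_basis (H : groupType) (I : Type) (b : I -> H) : Prop :=
  forall (K : groupType) (f : I -> K),
    (exists g : H -> K, group_hom g /\ forall i, g (b i) = f i) /\
    (forall g1 g2 : H -> K, group_hom g1 -> group_hom g2 ->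
       (forall i, g1 (b i) = g2 (b i)) -> forall x, g1 x = g2 x).

Definition zadditive (M N : zmodType) (f : M -> N) : Prop :=
  forall x y, f (x + y)%R = (f x + f y)%R.

Definition is_abelianization (H : groupType) (M : zmodType) (f : H -> M) : Prop :=
  [/\ forall x y, f (x * y) = (f x + f y)%R,
      (forall y, exists x, f x = y) &
      (forall x, f x = 0%R <-> commutator_subgroup x)].

Definition free_abelian_basis (M : zmodType) (I : Type) (b : I -> M) : Prop :=
  forall (N : zmodType) (f : I -> N),
    (exists g : M -> N, zadditive g /\ forall i, g (b i) = f i) /\
    (forall g1 g2 : M -> N, zadditive g1 -> zadditive g2 ->
       (forall i, g1 (b i) = g2 (b i)) -> forall x, g1 x = g2 x).

Definition is_free_abelian (M : zmodType) : Prop :=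
  exists (I : Type) (b : I -> M), free_abelian_basis b.

Definition is_cokernel (M N C : zmodType) (f : M -> N) (c : N -> C) : Prop :=
  [/\ zadditive c, (forall y, exists x, c x = y) &
      (forall y, c y = 0%R <-> exists x, y = f x)].

Section ProdGroup.
Variables (m : nat) (F : 'I_m -> groupType).

Definition prodG := {dffun forall i, F i}.
HB.instance Definition _ := Choice.on prodG.

Definition prodG_mul (x y : prodG) : prodG := [ffun i => x i * y i].
Definition prodG_one : prodG := [ffun i => 1].
Definition prodG_inv (x : prodG) : prodG := [ffun i => (x i)^-1].

Fact prodG_mulA : associative prodG_mul.
Proof. by move=> x y z; apply/ffunP=> i; rewrite !ffunE mulgA. Qed.
Fact prodG_mul1 : left_id prodG_one prodG_mul.
Proof. by move=> x; apply/ffunP=> i; rewrite !ffunE mul1g. Qed.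
Fact prodG_mulg1 : right_id prodG_one prodG_mul.
Proof. by move=> x; apply/ffunP=> i; rewrite !ffunE mulg1. Qed.
Fact prodG_mulV : left_inverse prodG_one prodG_inv prodG_mul.
Proof. by move=> x; apply/ffunP=> i; rewrite !ffunE mulVg. Qed.
Fact prodG_mulgV : right_inverse prodG_one prodG_inv prodG_mul.
Proof. by move=> x; apply/ffunP=> i; rewrite !ffunE mulgV. Qed.

HB.instance Definition _ := isGroup.Build prodG
  prodG_mulA prodG_mul1 prodG_mulg1 prodG_mulV prodG_mulgV.

Definition prodG_inj (i : 'I_m) (x : F i) : prodG :=
  [ffun k => match i =P k with
             | ReflectT e => ecast k (F k) e x
             | ReflectF _ => 1
             end].

End ProdGroup.

(* Main.v *)
Require Import Defs.
From HB Require Import structures.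
From mathcomp Require Import all_boot.
From Stdlib Require Import ClassicalEpsilon.
Import Algebra.
Set Implicit Arguments. Unset Strict Implicit. Unset Printing Implicit Defensive.

Section Comb.
Variables m n : nat.
Local Notation P := ('I_m * 'I_n)%type.
Local Notation V := ('I_m + 'I_n)%type.
Local Open Scope ring_scope.

Definition rs (N : zmodType) (E : {set P}) (h : P -> N) (i : 'I_m) : N :=
  \sum_(j < n) (if (i, j) \in E then h (i, j) else 0).
Definition cs (N : zmodType) (E : {set P}) (h : P -> N) (j : 'I_n) : N :=
  \sum_(i < m) (if (i, j) \in E then h (i, j) else 0).
Definition okh (N : zmodType) (E : {set P}) (h : P -> N) :=
  (forall i, rs E h i = 0) /\ (forall j, cs E h j = 0).

Definition adj (E : {set P}) : rel V := fun x y =>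
  match x, y with
  | inl i, inr j => (i, j) \in E
  | inr j, inl i => (i, j) \in E
  | _, _ => false end.

Definition D (N : zmodType) (E : {set P}) (h : P -> N) (v : V) : N :=
  match v with inl i => rs E h i | inr j => - cs E h j end.

Lemma sum_delta (N : zmodType) k (j0 : 'I_k) (x : N) :
  \sum_(j < k) (if j == j0 then x else 0) = x.
Proof. by rewrite (bigD1 j0) //= eqxx big1 ?addr0 // => j /negPf ->. Qed.

Lemma rs_add (N : zmodType) (E : {set P}) (h g : P -> N) i :
  rs E (fun p => h p + g p) i = rs E h i + rs E g i.
Proof. by rewrite /rs -big_split; apply: eq_bigr => j _; case: ifP => _ /=; rewrite ?addr0. Qed.
Lemma cs_add (N : zmodType) (E : {set P}) (h g : P -> N) j :
  cs E (fun p => h p + g p) j = cs E h j + cs E g j.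
Proof. by rewrite /cs -big_split; apply: eq_bigr => i _; case: ifP => _ /=; rewrite ?addr0. Qed.
Lemma rs_opp (N : zmodType) (E : {set P}) (h : P -> N) i :
  rs E (fun p => - h p) i = - rs E h i.
Proof. by rewrite /rs -sumrN; apply: eq_bigr => j _; case: ifP => _ /=; rewrite ?oppr0. Qed.
Lemma cs_opp (N : zmodType) (E : {set P}) (h : P -> N) j :
  cs E (fun p => - h p) j = - cs E h j.
Proof. by rewrite /cs -sumrN; apply: eq_bigr => i _; case: ifP => _ /=; rewrite ?oppr0. Qed.
Lemma D_add (N : zmodType) (E : {set P}) (h g : P -> N) v :
  D E (fun p => h p + g p) v = D E h v + D E g v.
Proof. by case: v => [i|j] /=; rewrite ?rs_add ?cs_add ?opprD. Qed.

Lemma rs_ext (N : zmodType) (E : {set P}) (h g : P -> N) i :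
  (forall p, p \in E -> h p = g p) -> rs E h i = rs E g i.
Proof. by move=> hg; apply: eq_bigr => j _; case: ifP => // /hg. Qed.
Lemma cs_ext (N : zmodType) (E : {set P}) (h g : P -> N) j :
  (forall p, p \in E -> h p = g p) -> cs E h j = cs E g j.
Proof. by move=> hg; apply: eq_bigr => i _; case: ifP => // /hg. Qed.

Lemma rs_del (N : zmodType) (E : {set P}) (h : P -> N) e i : e \in E ->
  rs E h i = rs (E :\ e) h i + (if i == e.1 then h e else 0).
Proof.
case: e => a b eE; rewrite /rs /=.
have -> : (if i == a then h (a, b) else 0) =
   \sum_(j < n) (if (i, j) == (a, b) then h (a, b) else 0).
  case: eqP => [->|ne]; last first.
    by rewrite big1 // => j _; case: eqP => // [[/ne]].
  rewrite -{1}(@sum_delta _ _ b (h (a, b))); apply: eq_bigr => j _.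
  by rewrite xpair_eqE eqxx.
rewrite -big_split; apply: eq_bigr => j _ /=.
rewrite in_setD1; case: eqP => [->|_]; first by rewrite eE add0r.
by rewrite addr0.
Qed.

Lemma cs_del (N : zmodType) (E : {set P}) (h : P -> N) e j : e \in E ->
  cs E h j = cs (E :\ e) h j + (if j == e.2 then h e else 0).
Proof.
case: e => a b eE; rewrite /cs /=.
have -> : (if j == b then h (a, b) else 0) =
   \sum_(i < m) (if (i, j) == (a, b) then h (a, b) else 0).
  case: eqP => [->|ne]; last first.
    by rewrite big1 // => i _; case: eqP => // [[_ /ne]].
  rewrite -{1}(@sum_delta _ _ a (h (a, b))); apply: eq_bigr => i _.
  by rewrite xpair_eqE eqxx andbT.
rewrite -big_split; apply: eq_bigr => i _ /=.
rewrite in_setD1; case: eqP => [->|_]; first by rewrite eE add0r.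
by rewrite addr0.
Qed.

Lemma rs_pt (N : zmodType) (E : {set P}) (c : N) e i : e \in E ->
  rs E (fun p => if p == e then c else 0) i = if i == e.1 then c else 0.
Proof.
move=> eE; rewrite (rs_del _ i eE) eqxx.
rewrite /rs big1 ?add0r // => j _; rewrite in_setD1; case: eqP => _ /=; by rewrite ?if_same.
Qed.
Lemma cs_pt (N : zmodType) (E : {set P}) (c : N) e j : e \in E ->
  cs E (fun p => if p == e then c else 0) j = if j == e.2 then c else 0.
Proof.
move=> eE; rewrite (cs_del _ j eE) eqxx.
rewrite /cs big1 ?add0r // => i _; rewrite in_setD1; case: eqP => _ /=; by rewrite ?if_same.
Qed.

Definition dl (N : zmodType) (x v : V) (c : N) := if v == x then c else 0.

Lemma eq_inl (k i : 'I_m) : (inl k == inl i :> V) = (k == i).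
Proof. by apply/eqP/eqP => [[]|->]. Qed.
Lemma eq_inr (k i : 'I_n) : (inr k == inr i :> V) = (k == i).
Proof. by apply/eqP/eqP => [[]|->]. Qed.
Lemma eq_inlr (k : 'I_m) (i : 'I_n) : (inl k == inr i :> V) = false.
Proof. by []. Qed.
Lemma eq_inrl (k : 'I_m) (i : 'I_n) : (inr i == inl k :> V) = false.
Proof. by []. Qed.

Lemma step (N : zmodType) (E : {set P}) (c : N) x y : adj E x y ->
  exists g : P -> N, forall v, D E g v = dl x v c - dl y v c.
Proof.
case: x => [i|j]; case: y => [i'|j'] //= hE.
- exists (fun p => if p == (i, j') then c else 0) => -[k|k] /=;
    rewrite /dl ?rs_pt ?cs_pt //= ?eq_inl ?eq_inr ?eq_inlr ?eq_inrl.
  + by rewrite subr0.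
  + by rewrite add0r.
- exists (fun p => if p == (i', j) then - c else 0) => -[k|k] /=;
    rewrite /dl ?rs_pt ?cs_pt //= ?eq_inl ?eq_inr ?eq_inlr ?eq_inrl.
  + by rewrite add0r; case: ifP => _; rewrite ?oppr0.
  + by rewrite subr0; case: ifP => _; rewrite ?opprK ?oppr0.
Qed.

Lemma rs0 (N : zmodType) (E : {set P}) i : rs E (fun _ => 0 : N) i = 0.
Proof. by rewrite /rs big1 // => j _; rewrite if_same. Qed.
Lemma cs0 (N : zmodType) (E : {set P}) j : cs E (fun _ => 0 : N) j = 0.
Proof. by rewrite /cs big1 // => i _; rewrite if_same. Qed.

Lemma walk (N : zmodType) (E : {set P}) (c : N) x p : path (adj E) x p ->
  exists g : P -> N, forall v, D E g v = dl x v c - dl (last x p) v c.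
Proof.
elim: p x => [|y p IH] x /=.
  move=> _; exists (fun _ => 0) => -[i|j] /=; by rewrite ?rs0 ?cs0 ?oppr0 subrr.
case/andP => hxy /IH [g Hg]; have [s Hs] := step c hxy.
exists (fun p => s p + g p) => v; rewrite D_add Hs Hg.
by rewrite addrA subrK.
Qed.

Lemma comp_sum (N : zmodType) (E : {set P}) (h : P -> N) (R : pred V) :
  (forall i j, (i, j) \in E -> R (inl i) = R (inr j)) ->
  \sum_(i < m | R (inl i)) rs E h i = \sum_(j < n | R (inr j)) cs E h j.
Proof.
move=> HR; rewrite /rs /cs big_mkcond [RHS]big_mkcond /=.
transitivity (\sum_(i < m) \sum_(j < n)
   (if (i, j) \in E then (if R (inl i) then h (i, j) else 0) else 0)).
  apply: eq_bigr => i _; case: ifP => Ri.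
    by apply: eq_bigr => j _; case: ifP.
  by rewrite big1 // => j _; rewrite if_same.
rewrite exchange_big; apply: eq_bigr => j _.
case: ifP => Rj.
  by apply: eq_bigr => i _; case: ifP => // /HR ->; rewrite Rj.
by rewrite big1 // => i _; case: ifP => // /HR ->; rewrite Rj.
Qed.

Lemma comb (E : {set P}) : exists I : {set P}, I \subset E /\
  (forall (N : zmodType) (h : P -> N), (forall p, p \in I -> h p = 0) ->
      okh E h -> forall p, p \in E -> h p = 0) /\
  (forall (N : zmodType) (f : P -> N), exists h : P -> N,
      (forall p, p \in I -> h p = f p) /\ okh E h).
Proof.
move: {2}#|E| (erefl #|E|) => k; elim: k E => [|k IH] E hk.
  have E0 : E = set0 by apply/eqP; rewrite -cards_eq0 hk.
  exists set0; split; first exact: sub0set.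
  split; first by move=> N h _ _ p; rewrite E0 inE.
  move=> N f; exists (fun _ => 0); split => [p|]; first by rewrite inE.
  by split => [i|j]; rewrite ?rs0 ?cs0.
have [[i0 j0] eE] : exists e, e \in E.
  by apply/set0Pn; rewrite -card_gt0 hk.
set E' := E :\ (i0, j0).
have hk' : #|E'| = k by move: hk; rewrite (cardsD1 (i0, j0) E) eE add1n => -[].
have [I' [sI' [U' X']]] := IH E' hk'.
case: (boolP (connect (adj E') (inl i0) (inr j0))) => hc.
- exists ((i0, j0) |: I'); split.
    apply/subsetP => p; rewrite in_setU1; case/orP => [/eqP -> //|/(subsetP sI')].
    by rewrite in_setD1 => /andP [].
  split.
  + move=> N h h0 [hr hcs] p pE.
    have he : h (i0, j0) = 0 by apply: h0; rewrite setU11.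
    have ok' : okh E' h.
      split=> [i|j].
        by move: (hr i); rewrite (rs_del _ i eE) he if_same addr0.
      by move: (hcs j); rewrite (cs_del _ j eE) he if_same addr0.
    case: (p =P (i0, j0)) => [->//|ne]; apply: (U' N h) => //.
      by move=> q qI; apply: h0; rewrite in_setU1 qI orbT.
    by rewrite in_setD1 pE andbT; apply/eqP.
  + move=> N f.
    case/connectP: hc => pth hpth hlast.
    have [g Hg] := walk (- f (i0, j0)) hpth.
    have [h1 [Hh1f [Hh1r Hh1c]]] := X' N (fun p => f p - g p).
    exists (fun p => if p == (i0, j0) then f (i0, j0) else h1 p + g p).
    split.
      move=> p; rewrite in_setU1; case: eqP => [->//|ne] /= pI.
      by rewrite Hh1f // subrK.
    split => [i|j].
      rewrite (rs_del _ i eE) /= eqxx.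
      rewrite (@rs_ext _ _ _ (fun p => h1 p + g p)); last first.
        by move=> p; rewrite in_setD1 => /andP [/negPf ->].
      rewrite rs_add Hh1r add0r.
      have := Hg (inl i); rewrite /= /dl -hlast eq_inl eq_inlr subr0 => ->.
      by case: ifP => _; rewrite ?addNr ?addr0.
    rewrite (cs_del _ j eE) /= eqxx.
    rewrite (@cs_ext _ _ _ (fun p => h1 p + g p)); last first.
      by move=> p; rewrite in_setD1 => /andP [/negPf ->].
    rewrite cs_add Hh1c add0r.
    have := Hg (inr j); rewrite /= /dl -hlast eq_inr eq_inrl sub0r => /oppr_inj ->.
    by case: ifP => _; rewrite ?addNr ?addr0.
- exists I'; split.
    by apply: subset_trans sI' _; apply: subsetDl.
  split.
  + move=> N h h0 [hr hcs] p pE.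
    set x := h (i0, j0).
    have r' i : rs E' h i = - (if i == i0 then x else 0).
      by have := hr i; rewrite (rs_del _ i eE) => /eqP; rewrite addr_eq0 => /eqP.
    have c' j : cs E' h j = - (if j == j0 then x else 0).
      by have := hcs j; rewrite (cs_del _ j eE) => /eqP; rewrite addr_eq0 => /eqP.
    have hx : x = 0.
      have := @comp_sum N E' h (connect (adj E') (inl i0)).
      have -> : \sum_(j < n | connect (adj E') (inl i0) (inr j)) cs E' h j = 0.
        rewrite big1 // => j Rj; rewrite c'; case: eqP => [ej|_]; last by rewrite oppr0.
        by rewrite -ej Rj in hc.
      rewrite (bigD1 i0) ?connect0 //= r' eqxx big1 ?addr0; last first.
        by move=> i /andP [_ /negPf ne]; rewrite r' ne oppr0.
      move=> H; apply: oppr_inj; rewrite oppr0 H //.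
      move=> i j ijE; apply/idP/idP => Hc; apply: connect_trans Hc _;
        by apply: connect1 => /=.
    have ok' : okh E' h by split => [i|j]; rewrite ?r' ?c' hx if_same oppr0.
    case: (p =P (i0, j0)) => [->//|ne]; apply: (U' N h) => //.
    by rewrite in_setD1 pE andbT; apply/eqP.
  + move=> N f; have [h1 [H1 [H1r H1c]]] := X' N f.
    exists (fun p => if p == (i0, j0) then 0 else h1 p); split.
      move=> p pI; have := subsetP sI' p pI.
      by rewrite in_setD1 => /andP [/negPf -> _]; apply: H1.
    split => [i|j].
      rewrite (rs_del _ _ eE) /= eqxx if_same addr0 -(H1r i).
      by apply: rs_ext => p; rewrite in_setD1 => /andP [/negPf ->].
    rewrite (cs_del _ _ eE) /= eqxx if_same addr0 -(H1c j).
    by apply: cs_ext => p; rewrite in_setD1 => /andP [/negPf ->].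
Qed.

End Comb.

Set Implicit Arguments. Unset Strict Implicit. Unset Printing Implicit Defensive.

Local Open Scope group_scope.

Definition ahom (H : groupType) (M : zmodType) (f : H -> M) :=
  forall x y, f (x * y) = (f x + f y)%R.

Lemma ahom1 (H : groupType) (M : zmodType) (f : H -> M) : ahom f -> f 1 = 0%R.
Proof. by move=> hf; apply: (@addrI _ (f 1)); rewrite -hf mulg1 addr0. Qed.

Lemma ahomV (H : groupType) (M : zmodType) (f : H -> M) x : ahom f -> f x^-1 = (- f x)%R.
Proof. by move=> hf; apply: (@addrI _ (f x)); rewrite -hf mulgV (ahom1 hf) subrr. Qed.

Lemma ahom_comm (H : groupType) (M : zmodType) (f : H -> M) :
  ahom f -> forall x, commutator_subgroup x -> f x = 0%R.
Proof.
move=> hf x hx; apply: (hx (fun y => f y = 0%R)).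
  split; first exact: ahom1.
  by move=> u v fu fv; rewrite hf ahomV // fu fv oppr0 addr0.
move=> y [u [v ->]]; rewrite /commg /conjg !hf !ahomV //.
by rewrite addrCA addKr addNr.
Qed.

Lemma ghom1 (H K : groupType) (f : H -> K) : group_hom f -> f 1 = 1.
Proof. by move=> hf; apply: (@mulgI _ (f 1)); rewrite -hf !mulg1. Qed.

Lemma ahom_comp (H K : groupType) (M : zmodType) (g : H -> K) (f : K -> M) :
  group_hom g -> ahom f -> ahom (fun x => f (g x)).
Proof. by move=> hg hf x y; rewrite hg hf. Qed.

Lemma ahom_big (H : groupType) (M : zmodType) (f : H -> M) (I : Type) r (P : pred I) F :
  ahom f -> f (\prod_(i <- r | P i) F i) = (\sum_(i <- r | P i) f (F i))%R.
Proof. by move=> hf; apply: (big_morph f hf (ahom1 hf)). Qed.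

Lemma zadd0 (M N : zmodType) (f : M -> N) : zadditive f -> f 0%R = 0%R.
Proof. by move=> hf; apply: (@addrI _ (f 0%R)); rewrite -hf !addr0. Qed.

Lemma zaddN (M N : zmodType) (f : M -> N) x : zadditive f -> f (- x)%R = (- f x)%R.
Proof. by move=> hf; apply: (@addrI _ (f x)); rewrite -hf !subrr zadd0. Qed.

Lemma surj_inv (T : choiceType) (U : eqType) (p : T -> U) :
  (forall y, exists x, p x = y) -> exists q : U -> T, forall y, p (q y) = y.
Proof.
move=> hs; have hs' : forall y, exists x, p x == y.
  by move=> y; case: (hs y) => x <-; exists x.
by exists (fun y => xchoose (hs' y)) => y; apply/eqP/(xchooseP (hs' y)).
Qed.

Lemma factor_ab (H : groupType) (M N : zmodType) (p : H -> M) (Psi : H -> N) :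
  is_abelianization p -> ahom Psi ->
  exists gt : M -> N, zadditive gt /\ forall x, gt (p x) = Psi x.
Proof.
case=> pM psurj pker hPsi.
have key : forall x y, p x = p y -> Psi x = Psi y.
  move=> x y pxy; apply/eqP; rewrite -subr_eq0; apply/eqP.
  have : p (x * y^-1) = 0%R by rewrite pM (ahomV _ pM) pxy subrr.
  by move/pker/(ahom_comm hPsi); rewrite hPsi (ahomV _ hPsi).
have [q hq] := surj_inv psurj.
exists (fun y => Psi (q y)); split.
  move=> y1 y2; rewrite -hPsi; apply: key.
  by rewrite pM !hq.
by move=> x; apply: key; rewrite hq.
Qed.

Lemma factor_coker (M N C K : zmodType) (f : M -> N) (c : N -> C) (gt : N -> K) :
  is_cokernel f c -> zadditive gt -> (forall x, gt (f x) = 0%R) ->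
  exists g : C -> K, zadditive g /\ forall y, g (c y) = gt y.
Proof.
case=> cadd csurj cker gadd gf.
have key : forall y1 y2, c y1 = c y2 -> gt y1 = gt y2.
  move=> y1 y2 cy; apply/eqP; rewrite -subr_eq0; apply/eqP.
  have : c (y1 - y2)%R = 0%R by rewrite cadd zaddN // cy subrr.
  by case/cker => x e; have := gf x; rewrite -e gadd zaddN.
have [q hq] := surj_inv csurj.
exists (fun y => gt (q y)); split.
  by move=> y1 y2; rewrite -gadd; apply: key; rewrite cadd !hq.
by move=> y; apply: key; rewrite hq.
Qed.

Section ProdLemmas.
Variables (m : nat) (F : 'I_m -> groupType).
Local Notation inj i x := (@prodG_inj m F i x).

Lemma prodG_mulE (x y : prodG F) k : (x * y) k = x k * y k.
Proof. by rewrite /= ffunE. Qed.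
Lemma prodG_oneE k : (1 : prodG F) k = 1.
Proof. by rewrite /= ffunE. Qed.
Lemma prodG_injE1 i (x : F i) : inj i x i = x.
Proof. by rewrite ffunE; case: (i =P i) => [e|//]; rewrite (eq_axiomK e). Qed.
Lemma prodG_injE2 i (x : F i) k : k != i -> inj i x k = 1.
Proof. by move=> nki; rewrite ffunE; case: (i =P k) => [e|//]; rewrite e eqxx in nki. Qed.

Lemma prodG_inj_hom i : group_hom (@prodG_inj m F i).
Proof.
move=> x y; apply/ffunP => k; rewrite prodG_mulE.
case: (k =P i) => [->|/eqP ne]; first by rewrite !prodG_injE1.
by rewrite !prodG_injE2 // mulg1.
Qed.

Lemma prodG_decomp (N : zmodType) (Phi : prodG F -> N) : ahom Phi ->
  forall x, Phi x = (\sum_(i < m) Phi (inj i (x i)))%R.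
Proof.
move=> hP x.
have H : forall r : seq 'I_m, uniq r ->
    Phi (finfun (fun k : 'I_m => if k \in r then x k else 1%g) : prodG F) = (\sum_(i <- r) Phi (inj i (x i)))%R.
  elim=> [|i r IH] /=.
    by move=> _; rewrite big_nil -(ahom1 hP); congr Phi.
  case/andP => ir ur; rewrite big_cons -IH // -hP; congr Phi.
  apply/ffunP => k; rewrite prodG_mulE.
  case: (k =P i) => [->|/eqP ne].
    by rewrite prodG_injE1 !ffunE (negPf ir) mem_head mulg1.
  by rewrite prodG_injE2 // !ffunE in_cons (negPf ne) mul1g.
rewrite -H ?index_enum_uniq //; congr Phi.
by apply/ffunP => k; rewrite ffunE mem_index_enum.
Qed.
End ProdLemmas.

Lemma ahom_ker_sub (H : groupType) (M : zmodType) (f : H -> M) :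
  ahom f -> is_subgroup (fun x => f x = 0%R).
Proof.
move=> hf; split; first exact: ahom1.
by move=> u v fu fv; rewrite hf ahomV // fu fv oppr0 addr0.
Qed.

Unset Implicit Arguments.
Set Strict Implicit.
Set Printing Implicit Defensive.

Local Open Scope group_scope.

Theorem mainTheorem14
  (n m : nat) (G : groupType) (a : 'I_n -> G)
  (Hgen : forall x : G, subgroup_gen (fun y => exists j, y = a j) x)
  (Hz : forall x : G, (\prod_(j < n) a j) * x = x * (\prod_(j < n) a j))
  (S : 'I_m -> {set 'I_n})
  (HS : forall i r : 'I_m, i != r -> (#|S i :&: S r| <= 1)%N)
  (GS : 'I_m -> groupType) (pi : forall i, G -> GS i)
  (Hpi : forall i, is_quotient_map
           (normal_closure (fun x => exists2 j, j \notin S i & x = a j)) (pi i))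
  (Gb : groupType) (qb : G -> Gb)
  (Hqb : is_quotient_map (subgroup_gen (fun x => x = \prod_(j < n) a j)) qb)
  (GbS : 'I_m -> groupType) (qbS : forall i, GS i -> GbS i)
  (HqbS : forall i, is_quotient_map
           (subgroup_gen (fun x => x = \prod_(j < n) pi i (a j))) (qbS i))
  (HfreeS : forall (i : 'I_m) (T : {set 'I_n}),
      T \subset S i -> #|T| = (#|S i| - 1)%N ->
      free_group_basis (fun t : {j : 'I_n | j \in T} => qbS i (pi i (a (sval t)))))
  (rhob : Gb -> prodG GbS)
  (Hrhob_hom : group_hom rhob)
  (Hrhob : forall x : G, rhob (qb x) = [ffun i => qbS i (pi i x)])
  (Gab : zmodType) (abG : G -> Gab) (HabG : is_abelianization abG)
  (Aab : zmodType) (abA : prodG GS -> Aab) (HabA : is_abelianization abA)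
  (Gbab : zmodType) (abGb : Gb -> Gbab) (HabGb : is_abelianization abGb)
  (Abab : zmodType) (abAb : prodG GbS -> Abab) (HabAb : is_abelianization abAb)
  (HGabfree : free_abelian_basis (fun j : 'I_n => abG (a j)))
  (HAabfree : free_abelian_basis
      (fun p : {p : 'I_m * 'I_n | p.2 \in S p.1} =>
         abA (prodG_inj (pi (sval p).1 (a (sval p).2)))))
  (rhobab : Gbab -> Abab)
  (Hrhobab_add : zadditive rhobab)
  (Hrhobab : forall x : Gb, rhobab (abGb x) = abAb (rhob x)) :
  forall (C : zmodType) (c : Abab -> C), is_cokernel rhobab c -> is_free_abelian C.
Proof.
move=> C c Hc.
have piM : forall i, group_hom (pi i) by move=> i; case: (Hpi i) => ? _ _.
have qbSM : forall i, group_hom (qbS i) by move=> i; case: (HqbS i) => ? _ _.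
have pi_out i j : j \notin S i -> pi i (a j) = 1.
  move=> jS; case: (Hpi i) => _ _ ker; apply: (proj2 (ker (a j))) => N _ HX; apply: HX; by exists j.
have qbS_z i : qbS i (\prod_(j < n) pi i (a j)) = 1.
  by case: (HqbS i) => _ _ ker; apply: (proj2 (ker _)) => N _ HX; exact: HX.
have abAbM : ahom abAb by case: HabAb.
have [cadd csurj cker] := Hc.
pose E := [set p : 'I_m * 'I_n | p.2 \in S p.1].
have inE_ i j : ((i, j) \in E) = (j \in S i) by rewrite inE.
have [I [sIE [UI XI]]] := comb E.
pose elt (e : 'I_m * 'I_n) : prodG GbS := prodG_inj (qbS e.1 (pi e.1 (a e.2))).
have injM i : group_hom (@prodG_inj m GbS i) by apply: prodG_inj_hom.
have hcomp (N : zmodType) (Phi : prodG GbS -> N) i : ahom Phi ->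
    ahom (fun x => Phi (@prodG_inj m GbS i (qbS i (pi i x)))).
  by move=> hP x y; rewrite piM qbSM injM hP.
have row0 (N : zmodType) (Phi : prodG GbS -> N) : ahom Phi ->
    forall i, rs E (fun e => Phi (elt e)) i = 0%R.
  move=> hP i; rewrite /rs.
  transitivity (\sum_(j < n) (fun x => Phi (@prodG_inj m GbS i (qbS i (pi i x)))) (a j))%R.
    apply: eq_bigr => j _; rewrite inE_; case: ifP => // /negbT /pi_out /= ->.
    by rewrite (ghom1 (qbSM i)) (ghom1 (injM i)) (ahom1 hP).
  rewrite -(ahom_big _ _ _ (hcomp _ _ i hP)) /=.
  by rewrite (big_morph (pi i) (piM i) (ghom1 (piM i))) qbS_z (ghom1 (injM i)) (ahom1 hP).
have col0 (N : zmodType) (g : C -> N) : zadditive g ->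
    forall j, cs E (fun e => g (c (abAb (elt e)))) j = 0%R.
  move=> hg j.
  have hP : ahom (fun x => g (c (abAb x))) by move=> x y; rewrite abAbM cadd hg.
  rewrite /cs.
  transitivity (\sum_(i < m) (fun x => g (c (abAb x)))
      (@prodG_inj m GbS i ([ffun i => qbS i (pi i (a j))] i)))%R.
    apply: eq_bigr => i _; rewrite ffunE inE_.
    case: ifP => [_|/negbT /pi_out /= ->] //.
    by rewrite (ghom1 (qbSM i)) (ghom1 (injM i)) (ahom1 hP).
  rewrite -(prodG_decomp hP) /= -Hrhob -Hrhobab.
  have -> : c (rhobab (abGb (qb (a j)))) = 0%R by apply/cker; eexists.
  exact: zadd0.
have Tex i : exists T : {set 'I_n}, T \subset S i /\ #|T| = (#|S i| - 1)%N.
  case: (set_0Vmem (S i)) => [->|[j0 j0S]].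
    by exists set0; rewrite sub0set cards0.
  exists (S i :\ j0); split; first exact: subsetDl.
  by rewrite (cardsD1 j0 (S i)) j0S add1n subn1.
exists {p : 'I_m * 'I_n | p \in I}, (fun q => c (abAb (elt (val q)))).
move=> N f; split.
- pose f' (p : 'I_m * 'I_n) : N := if insub p is Some q then f q else 0%R.
  have [h [hI [hr hcs]]] := XI N f'.
  have psiex : forall i, exists psi : GbS i -> N, ahom psi /\
      forall j, j \in S i -> psi (qbS i (pi i (a j))) = h (i, j).
    move=> i; case: (set_0Vmem (S i)) => [S0|[j0 j0S]].
      by exists (fun _ => 0%R); split => [x y|j]; rewrite ?addr0 // S0 inE.
    have TS : S i :\ j0 \subset S i by apply: subsetDl.
    have Tc : #|S i :\ j0| = (#|S i| - 1)%N.
      by rewrite (cardsD1 j0 (S i)) j0S add1n subn1.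
    have [[g [gM gb]] _] := HfreeS i _ TS Tc (to_multiplicative N) (fun t => h (i, sval t)).
    have gA : ahom g by move=> x y; exact: gM.
    have gT j (jT : j \in S i :\ j0) : g (qbS i (pi i (a j))) = h (i, j).
      exact: (gb (exist _ j jT)).
    exists g; split => // j jS.
    case: (j =P j0) => [->|/eqP ne]; last by apply: gT; rewrite in_setD1 ne jS.
    have r1 := hr i; rewrite /rs (bigD1 j0) //= inE_ j0S /= in r1.
    have r2 : (\sum_(j < n) (if (i, j) \in E then g (qbS i (pi i (a j))) else 0) = 0)%R.
      transitivity (\sum_(j < n) (fun x => g (qbS i (pi i x))) (a j))%R.
        apply: eq_bigr => k _; rewrite inE_; case: ifP => [_|/negbT /pi_out /= ->] //.
        by rewrite (ghom1 (qbSM i)) (ahom1 gA).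
      have hg' : ahom (fun x => g (qbS i (pi i x))) by move=> x y; rewrite piM qbSM gA.
      rewrite -(ahom_big _ _ _ hg') /=.
      by rewrite (big_morph (pi i) (piM i) (ghom1 (piM i))) qbS_z (ahom1 gA).
    rewrite (bigD1 j0) //= inE_ j0S /= in r2.
    apply: (@addIr _ (\sum_(k < n | k != j0)
        (if (i, k) \in E then h (i, k) else 0))%R).
    rewrite r1 -[RHS]r2; congr (_ + _)%R; apply: eq_bigr => k nk; rewrite inE_.
    by case: ifP => // kS; rewrite gT // in_setD1 nk kS.
  have [psi Hpsi] : exists psi : forall i, GbS i -> N, forall i, ahom (psi i) /\
      forall j, j \in S i -> psi i (qbS i (pi i (a j))) = h (i, j).
    exists (fun i => proj1_sig (constructive_indefinite_description _ (psiex i))).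
    move=> i; exact: (proj2_sig (constructive_indefinite_description _ (psiex i))).
  pose Psi (x : prodG GbS) : N := (\sum_(i < m) psi i (x i))%R.
  have PsiA : ahom Psi.
    move=> x y; rewrite /Psi -big_split; apply: eq_bigr => i _.
    by rewrite prodG_mulE (Hpsi i).1.
  have Psi_inj i y : Psi (@prodG_inj m GbS i y) = psi i y.
    rewrite /Psi (bigD1 i) //= prodG_injE1 big1 ?addr0 // => k nk.
    by rewrite prodG_injE2 ?(ahom1 (Hpsi k).1).
  have [gt [gtA gtE]] := factor_ab HabAb PsiA.
  have gt0 : forall x, gt (rhobab x) = 0%R.
    move=> x; case: HabGb => _ s1 _; have [x1 <-] := s1 x.
    case: Hqb => _ s2 _; have [x2 <-] := s2 x1.
    rewrite Hrhobab Hrhob gtE /Psi.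
    under eq_bigr => i _ do rewrite ffunE.
    have PhiA : ahom (fun x => \sum_(i < m) psi i (qbS i (pi i x)))%R.
      move=> u v; rewrite -big_split; apply: eq_bigr => i _.
      by rewrite piM qbSM (Hpsi i).1.
    apply: (Hgen x2 (fun x => \sum_(i < m) psi i (qbS i (pi i x)) = 0)%R).
      exact: ahom_ker_sub.
    move=> y [j ->]; rewrite -[RHS](hcs j) /cs; apply: eq_bigr => i _; rewrite inE_.
    case: ifP => [/(Hpsi i).2 //|/negbT /pi_out ->].
    by rewrite (ghom1 (qbSM i)) (ahom1 (Hpsi i).1).
  have [g [gA gE]] := factor_coker Hc gtA gt0.
  exists g; split => // -[[i j] qI] /=.
  rewrite gE gtE /elt /= Psi_inj (Hpsi i).2; last first.
    by rewrite -inE_; apply: (subsetP sIE).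
  rewrite hI // /f'.
  by rewrite (insubT (fun p => p \in I) qI).
move=> g1 g2 g1A g2A hg w.
have P1 : ahom (fun x => g1 (c (abAb x))) by move=> x y; rewrite abAbM cadd g1A.
have P2 : ahom (fun x => g2 (c (abAb x))) by move=> x y; rewrite abAbM cadd g2A.
pose h (e : 'I_m * 'I_n) := (g1 (c (abAb (elt e))) - g2 (c (abAb (elt e))))%R.
have hE : forall p, p \in E -> h p = 0%R.
  apply: (UI N h).
    by move=> p pI; rewrite /h (hg (exist _ p pI)) subrr.
  split => [i|j]; rewrite /h.
    by rewrite rs_add rs_opp (row0 _ _ P1) (row0 _ _ P2) subrr.
  by rewrite cs_add cs_opp (col0 _ _ g1A) (col0 _ _ g2A) subrr.
have agree i y : g1 (c (abAb (@prodG_inj m GbS i y))) = g2 (c (abAb (@prodG_inj m GbS i y))).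
  have [T [TS Tc]] := Tex i.
  have [_ U] := HfreeS i T TS Tc (to_multiplicative N) (fun _ => 0%R).
  apply: (U (fun y => g1 (c (abAb (@prodG_inj m GbS i y))))
            (fun y => g2 (c (abAb (@prodG_inj m GbS i y))))).
  - by move=> u v /=; rewrite injM P1.
  - by move=> u v /=; rewrite injM P2.
  move=> [j jT] /=; have jS := subsetP TS j jT.
  have := hE (i, j); rewrite inE_ => /(_ jS); rewrite /h => /eqP.
  by rewrite subr_eq0 => /eqP.
have [y <-] := csurj w; case: HabAb => _ s1 _; have [x <-] := s1 y.
rewrite (prodG_decomp P1) (prodG_decomp P2); apply: eq_bigr => i _; exact: agree.
Qed.
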